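(* Let $v\in C(S^1,(0,\infty))$ be separable in $S^1$ and suppose $\max_{S^1}v>\min_{S^1}v$. Then there exist $\alpha_0\in[0,2\pi)$ and $\theta_1,\theta_2\in[0,\pi)$ such that: (i) $\theta_1+\theta_2<\pi$; (ii) $v^{-1}(\max_{S^1}v)=\{(\cos(\alpha_0+\theta),\sin(\alpha_0+\theta)):|\theta|\le\theta_1\}$ and $v^{-1}(\min_{S^1}v)=\{(\cos(\alpha_0+\pi+\theta),\sin(\alpha_0+\pi+\theta)):|\theta|\le\theta_2\}$; (iii) $v(x)=v(l_{\alpha_0}(x))$ for all $x\in S^1_{\alpha_0}$; (iv) the function $\alpha\mapsto v((\cos\alpha,\sin\alpha))$ is not constant and is nonincreasing on $[\alpha_0,\alpha_0+\pi)$.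
   Context: $S^1\subset\mathbb{R}^2$ is the unit circle. For $\alpha\in\mathbb{R}$, $S^1_\alpha=\{(\cos(\alpha+\theta),\sin(\alpha+\theta)):\theta\in(0,\pi)\}$ (an open half-circle), and for $x\in S^1$, $l_\alpha(x)$ denotes the reflection of $x$ across the line through the origin with direction $(\cos\alpha,\sin\alpha)$. A function $v\in C(S^1,\mathbb{R})$ is called separable in $S^1$ if for every $\alpha\in[0,2\pi)$, either $v(l_\alpha(x))\ge v(x)$ for all $x\in S^1_\alpha$, or $v(l_\alpha(x))\le v(x)$ for all $x\in S^1_\alpha$. *)

(* Defs.v *)
From Stdlib Require Import Reals Lra.
Open Scope R_scope.

Definition on_S1 (p : R * R) : Prop := fst p ^ 2 + snd p ^ 2 = 1.

Definition cs (t : R) : R * R := (cos t, sin t).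

Definition dist2 (p q : R * R) : R :=
  sqrt ((fst p - fst q) ^ 2 + (snd p - snd q) ^ 2).

(* v in C(S^1, R): v is given on R^2 but only its restriction to S^1 matters;
   continuity is continuity of the restriction w.r.t. the induced topology. *)
Definition cont_on_S1 (v : R * R -> R) : Prop :=
  forall p, on_S1 p -> forall eps, 0 < eps -> exists delta, 0 < delta /\
    forall q, on_S1 q -> dist2 p q < delta -> Rabs (v q - v p) < eps.

Definition S1_half (alpha : R) (p : R * R) : Prop :=
  exists theta, 0 < theta < PI /\ p = cs (alpha + theta).

(* reflection across the line through 0 with direction (cos a, sin a):
   l_a(x) = 2 <x,u> u - x *)
Definition refl (a : R) (p : R * R) : R * R :=
  let d := fst p * cos a + snd p * sin a in
  (2 * d * cos a - fst p, 2 * d * sin a - snd p).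

Definition separable_S1 (v : R * R -> R) : Prop :=
  forall alpha, 0 <= alpha < 2 * PI ->
    (forall x, S1_half alpha x -> v (refl alpha x) >= v x) \/
    (forall x, S1_half alpha x -> v (refl alpha x) <= v x).

Definition is_max_S1 (v : R * R -> R) (M : R) : Prop :=
  (exists p, on_S1 p /\ v p = M) /\ (forall q, on_S1 q -> v q <= M).

Definition is_min_S1 (v : R * R -> R) (m : R) : Prop :=
  (exists p, on_S1 p /\ v p = m) /\ (forall q, on_S1 q -> m <= v q).

(* Main.v *)
Require Import Defs.
From Stdlib Require Import Reals Lra ZArith Classical.
Open Scope R_scope.
Definition per (f:R->R) := forall x, f (x + 2*PI) = f x.
Lemma per_nat f : per f -> forall n x, f (x + 2*PI*INR n) = f x /\ f (x - 2*PI*INR n) = f x.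
Proof.
  intros H n; induction n; intros x.
  - simpl. split; f_equal; ring.
  - rewrite S_INR. destruct (IHn x) as [H1 H2]. split.
    + replace (x + 2*PI*(INR n + 1)) with ((x + 2*PI*INR n) + 2*PI) by ring. now rewrite H.
    + rewrite <- H2. rewrite <- (H (x - 2*PI*(INR n+1))). f_equal; ring.
Qed.
Lemma per_Z f : per f -> forall k x, f (x + 2*PI*IZR k) = f x.
Proof.
  intros H k x. destruct k.
  - simpl. f_equal; ring.
  - replace (IZR (Z.pos p)) with (INR (Pos.to_nat p)) by (rewrite INR_IZR_INZ, positive_nat_Z; auto). apply per_nat; auto.
  - rewrite IZR_NEG. replace (IZR (Z.pos p)) with (INR (Pos.to_nat p)) by (rewrite INR_IZR_INZ, positive_nat_Z; auto).
    replace (x + 2*PI* - INR (Pos.to_nat p)) with (x - 2*PI*INR (Pos.to_nat p)) by ring.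
    apply per_nat; auto.
Qed.
Lemma reduce x c : exists k, c <= x + 2*PI*IZR k < c + 2*PI.
Proof.
  pose proof PI_RGT_0 as HP.
  set (y := (x-c)/(2*PI)). destruct (archimed y) as [H1 H2].
  exists (1 - up y)%Z. rewrite minus_IZR. set (u := IZR (up y)) in *.
  assert (Hy : y * (2*PI) = x - c) by (unfold y; field; lra).
  assert (2*PI*u > 2*PI*y) by (apply Rmult_lt_compat_l; lra).
  assert (2*PI*(u-1) <= 2*PI*y) by (apply Rmult_le_compat_l; lra).
  simpl IZR. split; nra.
Qed.
Definition contR (f:R->R) := forall t eps, 0 < eps -> exists d, 0 < d /\ forall x, Rabs (x - t) < d -> Rabs (f x - f t) < eps.
Definition sepN (f:R->R) b := forall th, 0 < th < PI -> f (b+th) <= f (b-th).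
Definition sepP (f:R->R) b := forall th, 0 < th < PI -> f (b-th) <= f (b+th).
Definition closedP (A : R -> Prop) := forall s, (forall d, 0<d -> exists x, Rabs (x-s) < d /\ A x) -> A s.

Lemma closed_gen f (sg : R) : contR f -> closedP (fun b => forall th, 0 < th < PI -> f (b+sg*th) <= f (b-sg*th)).
Proof.
  intros Hc s H th Hth. apply Rnot_lt_le; intro Hlt.
  set (e := (f (s + sg*th) - f (s - sg*th))/2).
  assert (He : 0 < e) by (unfold e; lra).
  destruct (Hc (s+sg*th) e He) as [d1 [Hd1 H1]].
  destruct (Hc (s-sg*th) e He) as [d2 [Hd2 H2]].
  destruct (H (Rmin d1 d2)) as [x [Hx Ax]]. apply Rmin_pos; auto.
  specialize (Ax th Hth).
  assert (Hx1 : Rabs (x - s) < d1) by (eapply Rlt_le_trans; [exact Hx| apply Rmin_l]).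
  assert (Hx2 : Rabs (x - s) < d2) by (eapply Rlt_le_trans; [exact Hx| apply Rmin_r]).
  specialize (H1 (x+sg*th)). specialize (H2 (x-sg*th)).
  replace (x + sg*th - (s+sg*th)) with (x-s) in H1 by ring.
  replace (x - sg*th - (s-sg*th)) with (x-s) in H2 by ring.
  specialize (H1 Hx1). specialize (H2 Hx2).
  apply Rabs_def2 in H1. apply Rabs_def2 in H2. unfold e in *. lra.
Qed.
Lemma closedN f : contR f -> closedP (sepN f).
Proof.
  intros Hc s H. pose proof (closed_gen f 1 Hc s) as K.
  intros th Hth. assert (K2 := K). 
  replace (s+th) with (s+1*th) by ring. replace (s-th) with (s-1*th) by ring.
  apply K; auto. intros d Hd. destruct (H d Hd) as [x [Hx Ax]]. exists x; split; auto.
  intros t Ht. replace (x+1*t) with (x+t) by ring. replace (x-1*t) with (x-t) by ring. auto.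
Qed.
Lemma closedPP f : contR f -> closedP (sepP f).
Proof.
  intros Hc s H. pose proof (closed_gen f (-1) Hc s) as K.
  intros th Hth.
  replace (s+th) with (s-(-1)*th) by ring. replace (s-th) with (s+(-1)*th) by ring.
  apply K; auto. intros d Hd. destruct (H d Hd) as [x [Hx Ax]]. exists x; split; auto.
  intros t Ht. replace (x+(-1)*t) with (x-t) by ring. replace (x-(-1)*t) with (x+t) by ring. auto.
Qed.

Lemma crossing (A B : R -> Prop) x y : closedP A -> closedP B -> x <= y -> A x -> B y ->
  (forall z, x <= z <= y -> A z \/ B z) -> exists z, x <= z <= y /\ A z /\ B z.
Proof.
  intros CA CB Hxy Ax By Hcov.
  set (E := fun z => x <= z <= y /\ forall w, x <= w <= z -> A w).
  assert (HE : bound E) by (exists y; intros z [Hz _]; lra).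
  assert (HEx : exists z, E z). { exists x. split. lra. intros w Hw. replace w with x by lra; auto. }
  destruct (completeness E HE HEx) as [s [Hs1 Hs2]].
  assert (Hxs : x <= s) by (apply Hs1; destruct HEx; unfold E; split; [lra|]; intros w Hw; replace w with x by lra; auto).
  assert (Hsy : s <= y) by (apply Hs2; intros z [Hz _]; lra).
  assert (C1 : forall w, x <= w < s -> A w).
  { intros w Hw. apply NNPP; intro NA.
    assert (s <= w). { apply Hs2. intros z [Hz Hz2]. apply Rnot_lt_le; intro Hl. apply NA. apply Hz2. lra. }
    lra. }
  assert (As : A s).
  { apply CA. intros d Hd. destruct (Rlt_dec (s - d/2) x).
    - exists x. split; auto. rewrite Rabs_left1; lra.
    - exists (s - d/2). split. rewrite Rabs_left1; lra. apply C1; lra. }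
  destruct (Req_dec s y) as [Heq|Hne].
  - exists s. split. lra. split; auto. subst s. auto.
  - exists s. split. lra. split; auto. apply CB. intros d Hd.
    set (w0 := Rmin (s + d/2) y).
    assert (Hw0 : s < w0 /\ w0 <= s + d/2 /\ w0 <= y).
    { unfold w0. split. apply Rmin_glb_lt; lra. split. apply Rmin_l. apply Rmin_r. }
    apply NNPP; intro Hn.
    assert (E w0).
    { split. lra. intros w Hw. destruct (Rlt_dec w s). apply C1; lra.
      destruct (Hcov w) as [h|h]; [lra|auto|]. exfalso; apply Hn. exists w. split; auto.
      rewrite Rabs_right; lra. }
    assert (w0 <= s) by (apply Hs1; auto). lra.
Qed.

Lemma sepP_shift f b : per f -> sepP f b -> sepN f (b+PI).
Proof.
  intros Hp H th Hth. specialize (H (PI - th)). 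
  replace (b+PI-th) with (b + (PI-th)) by ring.
  replace (b+PI+th) with ((b-(PI-th)) + 2*PI) by ring. rewrite Hp. apply H; lra.
Qed.
Lemma sepN_shift f b : per f -> sepN f b -> sepP f (b+PI).
Proof.
  intros Hp H th Hth. specialize (H (PI - th)). 
  replace (b+PI-th) with (b + (PI-th)) by ring.
  replace (b+PI+th) with ((b-(PI-th)) + 2*PI) by ring. rewrite Hp. apply H; lra.
Qed.
Lemma sepN_per f b : per f -> sepN f (b+2*PI) -> sepN f b.
Proof.
  intros Hp H th Hth. specialize (H th Hth). 
  replace (b+2*PI+th) with ((b+th)+2*PI) in H by ring.
  replace (b+2*PI-th) with ((b-th)+2*PI) in H by ring. rewrite !Hp in H. auto.
Qed.
Lemma sepP_per f b : per f -> sepP f (b+2*PI) -> sepP f b.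
Proof.
  intros Hp H th Hth. specialize (H th Hth). 
  replace (b+2*PI+th) with ((b+th)+2*PI) in H by ring.
  replace (b+2*PI-th) with ((b-th)+2*PI) in H by ring. rewrite !Hp in H. auto.
Qed.
Lemma sepN_perm f b : per f -> sepN f b -> sepN f (b-2*PI).
Proof.
  intros Hp H th Hth. specialize (H th Hth). 
  rewrite <- (Hp (b-2*PI+th)), <- (Hp (b - 2*PI - th)).
  replace (b-2*PI+th+2*PI) with (b+th) by ring.
  replace (b-2*PI-th+2*PI) with (b-th) by ring. auto.
Qed.

Definition axis (f:R->R) b := forall th, f (b+th) = f (b-th).

Lemma axis_full f b : per f -> sepN f b -> sepP f b -> axis f b.
Proof.
  intros Hp HN HP.
  assert (H0 : forall th, 0 < th < PI -> f (b+th) = f (b-th)).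
  { intros th Hth. apply Rle_antisym; auto. }
  intros th. destruct (reduce th 0) as [k Hk]. set (t := th + 2*PI*IZR k) in *.
  assert (E1 : f (b+th) = f (b+t)). { unfold t. rewrite <- (per_Z f Hp k (b+th)). f_equal; ring. }
  assert (E2 : f (b-th) = f (b-t)). { replace (b-th) with ((b-t) + 2*PI*IZR k) by (unfold t; ring). apply per_Z; auto. }
  rewrite E1, E2. clearbody t. pose proof PI_RGT_0.
  destruct (Rtotal_order t 0) as [h|[h|h]]; [lra| subst; f_equal; ring |].
  destruct (Rtotal_order t PI) as [h2|[h2|h2]].
  - apply H0; lra.
  - subst. rewrite <- (Hp (b-PI)). f_equal; ring.
  - rewrite <- (Hp (b-t)). replace (b-t+2*PI) with (b+(2*PI-t)) by ring.
    replace (b+t) with (b-(2*PI-t)+2*PI) by ring. rewrite Hp. symmetry. apply H0; lra.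
Qed.

Lemma axis_shift f b : per f -> axis f b -> axis f (b+PI).
Proof.
  intros Hp H th.
  replace (b+PI+th) with (b+(PI+th)) by ring. rewrite H.
  replace (b+PI-th) with ((b-(PI+th))+2*PI) by ring. rewrite Hp; auto.
Qed.

Lemma const_on (f:R->R) (q a M : R) : (forall x, f (x+q) = f x) -> 0 < q ->
  (forall x, a <= x <= a+q -> f x = M) ->
  forall n, forall x, a <= x <= a + (INR n + 1)*q -> f x = M.
Proof.
  intros Hq q0 H0 n. induction n; intros x Hx.
  - apply H0. simpl in Hx. lra.
  - rewrite S_INR in Hx. destruct (Rle_dec x (a + (INR n + 1)*q)).
    + apply IHn. lra.
    + replace x with ((x-q)+q) by ring. rewrite Hq.
      apply IHn. pose proof (pos_INR n). split; nra.
Qed.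

Lemma no_two_axes (f : R -> R) (M m a b0 al h : R) : per f -> (forall b, sepN f b \/ sepP f b) ->
  (forall t, f t <= M) -> f a = M -> f b0 = m -> m < M -> axis f al -> axis f (al+h) -> 0 < h < PI -> False.
Proof.
  intros Hp Hs HM Ha Hb Hmm A1 A2 Hh. pose proof PI_RGT_0 as HPI.
  assert (Hp2 : forall x, f (x + 2*h) = f x).
  { intros x. replace (x+2*h) with ((al+h) + (x+h-al)) by ring. rewrite A2.
    replace (al + h - (x + h - al)) with (al + (al - x)) by ring. rewrite A1. f_equal; ring. }
  assert (HQ : exists q, 0 < q <= PI /\ forall x, f (x+q) = f x).
  { destruct (Rle_dec (2*h) PI).
    - exists (2*h). split; auto. lra.
    - exists (2*PI - 2*h). split. lra. intros x.
      rewrite <- (Hp2 (x + (2*PI-2*h))). replace (x + (2 * PI - 2 * h) + 2 * h) with (x + 2*PI) by ring.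
      apply Hp. }
  destruct HQ as [q [Hq Hqp]].
  assert (Hy : exists y, a < y < a + q /\ f y < M).
  { apply NNPP; intro Hn.
    assert (H0 : forall x, a <= x <= a+q -> f x = M).
    { intros x Hx. destruct (Req_dec x a). subst; auto.
      destruct (Req_dec x (a+q)). subst. rewrite Hqp; auto.
      apply Rle_antisym; auto. apply Rnot_lt_le; intro Hl. apply Hn. exists x. split; auto. lra. }
    destruct (INR_unbounded (2*PI/q)) as [n Hn'].
    destruct (reduce b0 a) as [k Hk].
    assert (f (b0 + 2*PI*IZR k) = M).
    { apply (const_on f q a M Hqp (proj1 Hq) H0 n). split. lra.
      assert (INR n * q > 2*PI).
      { apply Rmult_gt_compat_r with (r:=q) in Hn'. 2: lra.
        replace (2*PI/q*q) with (2*PI) in Hn' by (field; lra). lra. }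
      nra. }
    rewrite per_Z in H; auto. lra. }
  destruct Hy as [y [Hy1 Hy2]].
  set (be := (a+y)/2). set (th := (y-a)/2).
  destruct (Hs be) as [HN|HP].
  - specialize (HN (q - th)). 
    replace (be + (q-th)) with (a+q) in HN by (unfold be, th; field).
    replace (be - (q-th)) with (y-q) in HN by (unfold be, th; field).
    rewrite Hqp in HN. replace y with ((y-q)+q) in Hy2 by ring. rewrite Hqp in Hy2.
    assert (f (y-q) >= M) by (apply Rle_ge; rewrite <- Ha; apply HN; unfold th; lra). lra.
  - specialize (HP th).
    replace (be - th) with a in HP by (unfold be, th; field).
    replace (be + th) with y in HP by (unfold be, th; field).
    assert (f a <= f y) by (apply HP; unfold th; lra). lra.
Qed.

Lemma find_axis (f : R -> R) (M m a b0 : R) : per f -> contR f -> (forall b, sepN f b \/ sepP f b) ->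
  (forall t, f t <= M) -> f a = M -> f b0 = m -> m < M ->
  exists al, 0 <= al < 2*PI /\ axis f al /\ forall be, al < be < al + PI -> sepN f be.
Proof.
  intros Hp Hc Hs HM Ha Hb Hmm. pose proof PI_RGT_0 as HPI.
  assert (S1 : exists s, 0 <= s <= PI /\ sepN f s /\ sepP f s).
  { destruct (Hs 0) as [H0|H0].
    - assert (sepP f PI) by (replace PI with (0+PI) by ring; apply sepN_shift; auto).
      destruct (crossing (sepN f) (sepP f) 0 PI) as [z Hz]; auto.
      apply closedN; auto. apply closedPP; auto. lra. eauto.
    - assert (sepN f PI) by (replace PI with (0+PI) by ring; apply sepP_shift; auto).
      destruct (crossing (sepP f) (sepN f) 0 PI) as [z Hz]; auto.
      apply closedPP; auto. apply closedN; auto. lra.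
      intros; destruct (Hs z); auto. exists z; tauto. }
  destruct S1 as [s [Hs0 [HN HP]]].
  assert (Ax : axis f s) by (apply axis_full; auto).
  assert (Case : (forall be, s < be < s + PI -> sepN f be) \/ (forall be, s < be < s + PI -> sepP f be)).
  { destruct (classic (forall be, s < be < s + PI -> sepN f be)) as [H|H]; [left; auto|].
    destruct (classic (forall be, s < be < s + PI -> sepP f be)) as [H'|H']; [right; auto|].
    exfalso.
    apply not_all_ex_not in H. destruct H as [b1 H]. apply imply_to_and in H. destruct H as [Hb1 Nb1].
    apply not_all_ex_not in H'. destruct H' as [b2 H']. apply imply_to_and in H'. destruct H' as [Hb2 Nb2].
    assert (P1 : sepP f b1) by (destruct (Hs b1); tauto).
    assert (N2 : sepN f b2) by (destruct (Hs b2); tauto).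
    assert (K : exists z, s < z < s + PI /\ sepN f z /\ sepP f z).
    { destruct (Rle_dec b1 b2).
      - destruct (crossing (sepP f) (sepN f) b1 b2) as [z Hz]; auto.
        apply closedPP; auto. apply closedN; auto.
        intros; destruct (Hs z); auto. exists z. split. lra. tauto.
      - destruct (crossing (sepN f) (sepP f) b2 b1) as [z Hz]; auto.
        apply closedN; auto. apply closedPP; auto. lra. 
        exists z. split. lra. tauto. }
    destruct K as [z [Hz [Nz Pz]]].
    apply (no_two_axes f M m a b0 s (z - s)); auto.
    replace (s + (z-s)) with z by ring. apply axis_full; auto. lra. }
  destruct Case as [C|C].
  - exists s. split. lra. split; auto.
  - destruct (Req_dec s PI) as [E|E].
    + exists 0. split. lra. split.
      * intros th. pose proof (axis_shift f s Hp Ax th) as K. rewrite E in K.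
        replace (0+th) with ((PI+PI+th) - 2*PI) by ring.
        rewrite <- (Hp (PI+PI+th-2*PI)). replace (PI + PI + th - 2 * PI + 2 * PI) with (PI+PI+th) by ring.
        rewrite K. replace (PI+PI-th) with ((0-th)+2*PI) by ring. apply Hp.
      * intros be Hbe. apply sepN_per; auto.
        replace (be + 2*PI) with ((be + PI) + PI) by ring. apply sepP_shift; auto.
        apply C. lra.
    + exists (s+PI). split. lra. split. apply axis_shift; auto.
      intros be Hbe. replace be with ((be - PI) + PI) by ring. apply sepP_shift; auto.
      apply C. lra.
Qed.

Lemma contR_plus f c : contR f -> contR (fun x => f (c + x)).
Proof.
  intros H t e He. destruct (H (c+t) e He) as [d [Hd K]]. exists d. split; auto.
  intros x Hx. apply K. replace (c+x-(c+t)) with (x-t) by ring. auto.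
Qed.
Lemma contR_minus f c : contR f -> contR (fun x => f (c - x)).
Proof.
  intros H t e He. destruct (H (c-t) e He) as [d [Hd K]]. exists d. split; auto.
  intros x Hx. apply K. replace (c-x-(c-t)) with (-(x-t)) by ring. rewrite Rabs_Ropp. auto.
Qed.

Lemma level_sup (g : R -> R) c : contR g -> g 0 = c -> g PI <> c ->
  (forall t t', 0 <= t' <= t -> t <= PI -> g t = c -> g t' = c) ->
  exists t1, 0 <= t1 < PI /\ forall t, 0 <= t <= PI -> (g t = c <-> t <= t1).
Proof.
  intros Hc H0 HPi Hmon. pose proof PI_RGT_0.
  set (E := fun t => 0 <= t <= PI /\ g t = c).
  assert (HE : bound E) by (exists PI; intros z [Hz _]; lra).
  assert (HEx : exists z, E z) by (exists 0; split; auto; lra).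
  destruct (completeness E HE HEx) as [s [Hs1 Hs2]].
  assert (H0s : 0 <= s) by (apply Hs1; split; auto; lra).
  assert (HsP : s <= PI) by (apply Hs2; intros z [Hz _]; lra).
  assert (Gs : g s = c).
  { apply NNPP; intro Hne. set (e := Rabs (g s - c)).
    assert (He : 0 < e) by (apply Rabs_pos_lt; lra).
    destruct (Hc s e He) as [d [Hd K]].
    assert (exists z, E z /\ s - d < z).
    { apply NNPP; intro Hn. assert (s <= s - d/2).
      { apply Hs2. intros z Ez. apply Rnot_lt_le; intro. apply Hn. exists z. split; auto. lra. }
      lra. }
    destruct H1 as [z [[Hz Gz] Hz2]]. assert (z <= s) by (apply Hs1; split; auto).
    assert (Hzs : Rabs (z - s) < d) by (rewrite Rabs_left1; lra).
    specialize (K z Hzs). rewrite Gz in K. unfold e in K. rewrite <- Rabs_Ropp in K.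
    replace (- (c - g s)) with (g s - c) in K by ring. lra. }
  exists s. split. split; auto. destruct (Req_dec s PI); auto. subst. contradiction.
  lra. intros t Ht. split.
  - intros Gt. apply Hs1. split; auto.
  - intros Hts. apply (Hmon s t); auto. lra.
Qed.

Lemma final_f (f : R -> R) (M m al : R) : per f -> contR f ->
  (forall t, f t <= M) -> (forall t, m <= f t) -> (exists a, f a = M) -> (exists b, f b = m) -> m < M ->
  axis f al -> (forall be, al < be < al + PI -> sepN f be) ->
  (forall s t, al <= s -> s <= t -> t <= al + PI -> f t <= f s) /\
  f al = M /\ f (al + PI) = m /\
  exists t1 t2, 0 <= t1 < PI /\ 0 <= t2 < PI /\ t1 + t2 < PI /\
   (forall u, -PI <= u <= PI -> (f (al + u) = M <-> Rabs u <= t1)) /\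
   (forall u, -PI <= u <= PI -> (f (al + PI + u) = m <-> Rabs u <= t2)).
Proof.
  intros Hp Hc HM Hm [a Ha] [b Hb] Hmm Ax HN. pose proof PI_RGT_0.
  assert (Mono : forall s t, al <= s -> s <= t -> t <= al + PI -> f t <= f s).
  { intros s t H1 H2 H3. destruct (Req_dec s t). subst; lra.
    assert (K : sepN f ((s+t)/2)) by (apply HN; lra).
    specialize (K ((t-s)/2)).
    replace ((s+t)/2 + (t-s)/2) with t in K by field. replace ((s+t)/2 - (t-s)/2) with s in K by field.
    apply K; lra. }
  assert (Red : forall t, exists u, -PI <= u < PI /\ f t = f (al + u)).
  { intros t. destruct (reduce t (al - PI)) as [k Hk]. exists (t + 2*PI*IZR k - al). split. lra.
    rewrite <- (per_Z f Hp k t). f_equal; ring. }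
  assert (Fal : f al = M).
  { apply Rle_antisym; auto. rewrite <- Ha. destruct (Red a) as [u [Hu E]]. rewrite E.
    destruct (Rle_dec 0 u). apply Mono; lra. rewrite (Ax u). apply Mono; lra. }
  assert (Fpi : f (al+PI) = m).
  { apply Rle_antisym; auto. rewrite <- Hb. destruct (Red b) as [u [Hu E]]. rewrite E.
    destruct (Rle_dec 0 u). apply Mono; lra. rewrite (Ax u). apply Mono; lra. }
  split; auto. split; auto. split; auto.
  destruct (level_sup (fun x => f (al + x)) M) as [t1 [Ht1 L1]].
  apply contR_plus; auto. simpl. rewrite Rplus_0_r; auto. simpl. lra.
  { intros t t' H1 H2 H3. apply Rle_antisym; auto. rewrite <- H3. apply Mono; lra. }
  destruct (level_sup (fun x => f (al + PI - x)) m) as [t2 [Ht2 L2]].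
  apply contR_minus; auto. simpl. rewrite Rminus_0_r; auto. simpl. replace (al+PI-PI) with al by ring. lra.
  { intros t t' H1 H2 H3. apply Rle_antisym; auto. rewrite <- H3. apply Mono; lra. }
  simpl in L1, L2.
  exists t1, t2. split; auto. split; auto. split.
  { apply Rnot_le_lt; intro. assert (f (al + t1) = M) by (apply L1; lra).
    assert (f (al + PI - (PI - t1)) = m) by (apply L2; lra).
    replace (al + PI - (PI - t1)) with (al + t1) in H2 by ring. lra. }
  split.
  - intros u Hu. destruct (Rle_dec 0 u).
    + rewrite Rabs_right by lra. apply L1; lra.
    + rewrite Rabs_left by lra. rewrite Ax. replace (al - u) with (al + - u) by ring. apply L1; lra.
  - intros u Hu. assert (Ax2 := axis_shift f al Hp Ax). destruct (Rle_dec 0 u).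
    + rewrite Rabs_right by lra. rewrite Ax2. apply L2; lra.
    + rewrite Rabs_left by lra. replace (al + PI + u) with (al + PI - - u) by ring. apply L2; lra.
Qed.

Lemma per_cos : per cos.
Proof. intros x. rewrite cos_plus, cos_2PI, sin_2PI. ring. Qed.
Lemma per_sin : per sin.
Proof. intros x. rewrite sin_plus, cos_2PI, sin_2PI. ring. Qed.
Lemma cs_Z x k : cs (x + 2*PI*IZR k) = cs x.
Proof. unfold cs. rewrite (per_Z cos per_cos), (per_Z sin per_sin). auto. Qed.
Lemma cs_on t : on_S1 (cs t).
Proof. unfold on_S1, cs; simpl. pose proof (sin2_cos2 t). unfold Rsqr in H. lra. Qed.

Lemma S1_param p : on_S1 p -> exists t, p = cs t.
Proof.
  destruct p as [x y]. unfold on_S1; simpl. intros H.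
  assert (Hx : -1 <= x <= 1) by (split; nra).
  assert (Hy : 1 - x² = y²) by (unfold Rsqr; lra).
  destruct (Rle_dec 0 y).
  - exists (acos x). unfold cs. rewrite cos_acos, sin_acos by auto. rewrite Hy, sqrt_Rsqr; auto.
  - exists (- acos x). unfold cs. rewrite cos_neg, sin_neg, cos_acos, sin_acos by auto.
    rewrite Hy, sqrt_Rsqr_abs, Rabs_left by lra. f_equal; ring.
Qed.

Lemma abs_sin_le w : Rabs (sin w) <= Rabs w.
Proof.
  assert (K : forall w, 0 < w -> Rabs (sin w) <= w).
  { intros u Hu. pose proof (sin_lt_x u Hu). pose proof (SIN_bound u). pose proof PI2_1.
    apply Rabs_le. split; [|lra]. destruct (Rle_dec 1 u). lra.
    assert (0 < sin u) by (apply sin_gt_0; lra). lra. }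
  destruct (Rtotal_order w 0) as [h|[h|h]].
  - rewrite (Rabs_left w) by lra. rewrite <- Rabs_Ropp, <- sin_neg. apply K; lra.
  - subst. rewrite sin_0. lra.
  - rewrite (Rabs_right w) by lra. apply K; auto.
Qed.

Lemma cs_dist t x : dist2 (cs t) (cs x) <= Rabs (x - t).
Proof.
  unfold dist2, cs; cbn [fst snd].
  assert (E : (cos t - cos x) ^ 2 + (sin t - sin x) ^ 2 = 4 * (sin ((x-t)/2))²).
  { pose proof (sin2_cos2 t). pose proof (sin2_cos2 x). unfold Rsqr in *.
    assert (cos (x - t) = 1 - 2 * sin ((x-t)/2) * sin ((x-t)/2)).
    { rewrite <- cos_2a_sin. f_equal; field. }
    rewrite cos_minus in H1. nra. }
  rewrite E. rewrite <- sqrt_Rsqr_abs. apply sqrt_le_1_alt.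
  pose proof (abs_sin_le ((x-t)/2)). rewrite Rsqr_abs. 
  rewrite (Rsqr_abs (x-t)). 
  assert (Rabs (x - t) = 2 * Rabs ((x-t)/2)).
  { replace (x-t) with (2*((x-t)/2)) at 1 by field. rewrite Rabs_mult, Rabs_right; lra. }
  rewrite H0. pose proof (Rabs_pos (sin ((x - t) / 2))). unfold Rsqr. nra.
Qed.

Lemma refl_cs a th : refl a (cs (a + th)) = cs (a - th).
Proof.
  unfold refl, cs; simpl.
  replace (cos (a + th) * cos a + sin (a + th) * sin a) with (cos th).
  2:{ rewrite <- cos_minus. f_equal; ring. }
  rewrite cos_plus, cos_minus, sin_plus, sin_minus. f_equal; ring.
Qed.

Theorem lemma2p1 (v : R * R -> R) (M m : R) :
  cont_on_S1 v ->
  (forall p, on_S1 p -> 0 < v p) ->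
  separable_S1 v ->
  is_max_S1 v M -> is_min_S1 v m -> m < M ->
  exists alpha0 theta1 theta2 : R,
    0 <= alpha0 < 2 * PI /\ 0 <= theta1 < PI /\ 0 <= theta2 < PI /\
    (* (i) *)
    theta1 + theta2 < PI /\
    (* (ii) *)
    (forall p, on_S1 p ->
       (v p = M <-> exists theta, Rabs theta <= theta1 /\ p = cs (alpha0 + theta))) /\
    (forall p, on_S1 p ->
       (v p = m <-> exists theta, Rabs theta <= theta2 /\ p = cs (alpha0 + PI + theta))) /\
    (* (iii) *)
    (forall x, S1_half alpha0 x -> v x = v (refl alpha0 x)) /\
    (* (iv) *)
    (exists a b, v (cs a) <> v (cs b)) /\
    (forall a b, alpha0 <= a -> a <= b -> b < alpha0 + PI -> v (cs b) <= v (cs a)).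
Proof.
  intros Hc _ Hsep [[pM [HpM HvM]] HM] [[pm [Hpm Hvm]] Hm] Hmm.
  pose proof PI_RGT_0 as HPI.
  set (f := fun t => v (cs t)).
  assert (Hp : per f).
  { intros x. unfold f. replace (x + 2*PI) with (x + 2*PI*IZR 1) by (simpl; ring). rewrite cs_Z. auto. }
  assert (Hcf : contR f).
  { intros t e He. destruct (Hc (cs t) (cs_on t) e He) as [d [Hd K]]. exists d. split; auto.
    intros x Hx. apply K. apply cs_on. eapply Rle_lt_trans. apply cs_dist. auto. }
  assert (Hs : forall b, sepN f b \/ sepP f b).
  { intros b. destruct (reduce b 0) as [k Hk]. set (b' := b + 2*PI*IZR k) in *.
    assert (Eq : forall th, f (b + th) = f (b' + th) /\ f (b - th) = f (b' - th)).
    { intros th. unfold f, b'. split.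
      - replace (b + 2*PI*IZR k + th) with ((b+th) + 2*PI*IZR k) by ring. rewrite cs_Z; auto.
      - replace (b + 2*PI*IZR k - th) with ((b-th) + 2*PI*IZR k) by ring. rewrite cs_Z; auto. }
    destruct (Hsep b' ltac:(lra)) as [H|H].
    - left. intros th Hth. destruct (Eq th) as [E1 E2]. rewrite E1, E2. unfold f.
      rewrite <- refl_cs. apply Rge_le, H. exists th. split; auto.
    - right. intros th Hth. destruct (Eq th) as [E1 E2]. rewrite E1, E2. unfold f.
      rewrite <- refl_cs. apply H. exists th. split; auto. }
  assert (HMf : forall t, f t <= M) by (intros; apply HM; apply cs_on).
  assert (Hmf : forall t, m <= f t) by (intros; apply Hm; apply cs_on).
  destruct (S1_param pM HpM) as [a Ha]. destruct (S1_param pm Hpm) as [b Hb].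
  assert (Fa : f a = M) by (unfold f; rewrite <- Ha; auto).
  assert (Fb : f b = m) by (unfold f; rewrite <- Hb; auto).
  destruct (find_axis f M m a b Hp Hcf Hs HMf Fa Fb Hmm) as [al [Hal [Ax HN]]].
  destruct (final_f f M m al Hp Hcf HMf Hmf (ex_intro _ a Fa) (ex_intro _ b Fb) Hmm Ax HN)
    as [Mono [Fal [Fpi [t1 [t2 [Ht1 [Ht2 [Hsum [L1 L2]]]]]]]]].
  exists al, t1, t2. split; auto. split; auto. split; auto. split; auto.
  split; [|split; [|split; [|split]]].
  - intros p Hp0. destruct (S1_param p Hp0) as [t Ht]. subst p.
    destruct (reduce t (al - PI)) as [k Hk].
    set (u := t + 2*PI*IZR k - al).
    assert (Ec : cs t = cs (al + u)) by (unfold u; rewrite <- (cs_Z t k); f_equal; ring).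
    rewrite Ec. split.
    + intros H. exists u. split; auto. apply L1. unfold u; lra. auto.
    + intros [th [Hth E]]. rewrite E. apply (L1 th). 
      revert Hth; unfold Rabs; destruct (Rcase_abs th); intros; lra. auto.
  - intros p Hp0. destruct (S1_param p Hp0) as [t Ht]. subst p.
    destruct (reduce t al) as [k Hk].
    set (u := t + 2*PI*IZR k - al - PI).
    assert (Ec : cs t = cs (al + PI + u)) by (unfold u; rewrite <- (cs_Z t k); f_equal; ring).
    rewrite Ec. split.
    + intros H. exists u. split; auto. apply L2. unfold u; lra. auto.
    + intros [th [Hth E]]. rewrite E. apply (L2 th). 
      revert Hth; unfold Rabs; destruct (Rcase_abs th); intros; lra. auto.
  - intros x [th [Hth E]]. subst x. rewrite refl_cs. apply (Ax th).
  - exists al, (al + PI). change (f al <> f (al + PI)). lra.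
  - intros a0 b0 H1 H2 H3. apply (Mono a0 b0); lra.
Qed.
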